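(* Let $f:\mathbb{R}^d\to\mathbb{R}$ be convex and $L$-smooth with a minimizer $x^\star$, and let $x_0\in\mathbb{R}^d$ satisfy $f(x_0)-f(x^\star)\le\Delta_0$. Fix an integer $N\ge1$, let $\theta_N=1$ and, for $k=N-1,\dots,0$, let $\theta_k>0$ satisfy $\theta_k^2-\theta_k=\theta_{k+1}^2$. Let $v_0=\mathbf{0}$ and for $k=0,\dots,N-1$, $$v_{k+1}=v_k+\frac{1}{L\theta_k\theta_{k+1}^2}\nabla f(x_k),\qquad x_{k+1}=x_k-\frac{1}{L}\nabla f(x_k)-(2\theta_{k+1}^3-\theta_{k+1}^2)v_{k+1}.$$ Then the output satisfies $\|\nabla f(x_N)\|^2\le\dfrac{8L\Delta_0}{(N+2)^2}$.
   Context: $L$-smooth means $\|\nabla f(x)-\nabla f(y)\|\le L\|x-y\|$ for all $x,y$; $\|\cdot\|$ is the Euclidean norm. *)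

(* Defs.v *)
From HB Require Import structures.
From mathcomp Require Import all_boot all_order all_algebra.
From mathcomp Require Import all_classical all_reals all_analysis.
Set Implicit Arguments. Unset Strict Implicit. Unset Printing Implicit Defensive.
Import Order.TTheory GRing.Theory Num.Theory.
Import numFieldNormedType.Exports.
Local Open Scope ring_scope.

(* Euclidean inner product and Euclidean norm on R^d (the library norm on
   'rV is the max norm, so we define the Euclidean one explicitly). *)
Definition dotv {R : realType} {d : nat} (u v : 'rV[R]_d) : R :=
  \sum_(i < d) u ord0 i * v ord0 i.

Definition enorm {R : realType} {d : nat} (u : 'rV[R]_d) : R :=
  Num.sqrt (dotv u u).

Definition is_gradient {R : realType} {d : nat}
  (f : 'rV[R]_d -> R) (g : 'rV[R]_d -> 'rV[R]_d) : Prop :=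
  forall x, differentiable f x /\ forall v, ('d f x : 'rV[R]_d -> R) v = dotv (g x) v.

Definition convex_fun {R : realType} {d : nat} (f : 'rV[R]_d -> R) : Prop :=
  forall (x y : 'rV[R]_d) (t : R), 0 <= t -> t <= 1 ->
    f (t *: x + (1 - t) *: y) <= t * f x + (1 - t) * f y.

Definition L_smooth {R : realType} {d : nat} (L : R) (g : 'rV[R]_d -> 'rV[R]_d) : Prop :=
  forall x y, enorm (g x - g y) <= L * enorm (x - y).

(* Main.v *)
Require Import Defs.
From HB Require Import structures.
From mathcomp Require Import all_boot all_order all_algebra.
From mathcomp Require Import all_classical all_reals all_analysis.
From mathcomp Require Import ring lra.
Import Order.TTheory GRing.Theory Num.Theory.
Import numFieldNormedType.Exports.
Local Open Scope ring_scope.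
Section Dot.
Context {R : realType} {d : nat}.
Implicit Types u w z : 'rV[R]_d.
Lemma dotvDl u w z : dotv (u + w) z = dotv u z + dotv w z.
Proof. by rewrite /dotv -big_split; apply: eq_bigr => i _; rewrite !mxE mulrDl. Qed.
Lemma dotvC u w : dotv u w = dotv w u.
Proof. by apply: eq_bigr => i _; rewrite mulrC. Qed.
Lemma dotvDr u w z : dotv z (u + w) = dotv z u + dotv z w.
Proof. by rewrite dotvC dotvDl !(dotvC z). Qed.
Lemma dotvZl (c : R) u z : dotv (c *: u) z = c * dotv u z.
Proof. by rewrite /dotv mulr_sumr; apply: eq_bigr => i _; rewrite !mxE mulrA. Qed.
Lemma dotvZr (c : R) u z : dotv z (c *: u) = c * dotv z u.
Proof. by rewrite dotvC dotvZl dotvC. Qed.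
Lemma dotvNl u z : dotv (- u) z = - dotv u z.
Proof. by rewrite -scaleN1r dotvZl mulN1r. Qed.
Lemma dotvNr u z : dotv z (- u) = - dotv z u.
Proof. by rewrite dotvC dotvNl dotvC. Qed.
Lemma dotv0l z : dotv 0 z = 0.
Proof. by rewrite -(scale0r (0 : 'rV[R]_d)) dotvZl mul0r. Qed.
Lemma dotvv_ge0 u : 0 <= dotv u u.
Proof. by apply: sumr_ge0 => i _; rewrite -expr2 sqr_ge0. Qed.
End Dot.
Lemma dsq (R : realType) (B c : R) : is_derive c 1 (fun s : R => s ^+ 2 * B) (2 * c * B).
Proof.
have -> : (fun s : R => s ^+ 2 * B) = B \*: (@id R * @id R).
  by apply/funext => s /=; rewrite mulrC expr2.
apply: is_derive_eq.
change (B * (c * 1 + c * 1) = 2 * c * B); ring.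
Qed.
Lemma dlin (R : realType) (B c : R) : is_derive c 1 (fun s : R => s * B) B.
Proof.
have -> : (fun s : R => s * B) = B \*: (@id R).
  by apply/funext => s /=; rewrite mulrC.
apply: is_derive_eq.
change (B * 1 = B); ring.
Qed.
Lemma line_derive (R : realType) (d : nat) (f : 'rV[R]_d -> R) g x u (τ : R) :
  is_gradient f g ->
  is_derive τ 1 (fun s : R => f (s *: u + x)) (dotv (g (τ *: u + x)) u).
Proof.
move=> hg.
have E : (fun h : R => h^-1 *: (((fun s : R => f (s *: u + x)) \o shift τ) (h *: 1)
            - (fun s : R => f (s *: u + x)) τ))
       = (fun h : R => h^-1 *: ((f \o shift (τ *: u + x)) (h *: u) - f (τ *: u + x))).
  apply/funext => h /=; congr (_ *: (f _ - _)).
  rewrite /shift /= scalerDl addrA; congr (_ *: u + _ + _).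
  by change (h * 1 = h); rewrite mulr1.
have [df dv] := hg (τ *: u + x).
apply: DeriveDef.
  by rewrite /derivable E; exact: diff_derivable.
rewrite /derive E.
change ('D_u f (τ *: u + x) = dotv (g (τ *: u + x)) u).
by rewrite deriveE.
Qed.

Lemma sq_enorm (R : realType) (d : nat) (u : 'rV[R]_d) : enorm u ^+ 2 = dotv u u.
Proof. by rewrite /enorm sqr_sqrtr // dotvv_ge0. Qed.

Lemma grad_dev (R : realType) (d : nat) (g : 'rV[R]_d -> 'rV[R]_d) L x u (c : R) :
  0 < L -> L_smooth L g -> 0 < c ->
  - (c * L * dotv u u) <= dotv (g (c *: u + x) - g x) u <= c * L * dotv u u.
Proof.
move=> hL hs hc.
set w := g (c *: u + x) - g x.
set M := c * L.
have hM : 0 < M by rewrite /M mulr_gt0.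
have hw : dotv w w <= M ^+ 2 * dotv u u.
  have h1 := hs (c *: u + x) x.
  rewrite -/w (_ : c *: u + x - x = c *: u) in h1; last by rewrite addrK.
  have h0 : 0 <= enorm w by rewrite /enorm sqrtr_ge0.
  have h2 : enorm w ^+ 2 <= (L * enorm (c *: u)) ^+ 2.
    by rewrite ler_pXn2r // ?nnegrE // (le_trans h0 h1).
  rewrite sq_enorm exprMn sq_enorm dotvZl dotvZr in h2.
  by rewrite (le_trans h2) // /M le_eqVlt; apply/orP; left; apply/eqP; ring.
clearbody w M.
have e1 := dotvv_ge0 (w - M *: u).
have e2 := dotvv_ge0 (w + M *: u).
rewrite !(dotvDl, dotvDr, dotvNl, dotvNr, dotvZl, dotvZr) ?(dotvC u w) in e1 e2.
have huu := dotvv_ge0 u.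
apply/andP; split.
  rewrite -subr_ge0 -(pmulr_rge0 _ hM). nra.
rewrite -subr_ge0 -(pmulr_rge0 _ hM). nra.
Qed.

Lemma descent_both (R : realType) (d : nat) (f : 'rV[R]_d -> R) g L x u (sg : R) :
  0 < L -> is_gradient f g -> L_smooth L g -> (sg = 1 \/ sg = -1) ->
  0 <= sg * (f x + dotv (g x) u + sg * (L / 2 * dotv u u) - f (u + x)).
Proof.
move=> hL hg hs hsg.
set A := dotv (g x) u.
set B := sg * (L / 2 * dotv u u).
pose F := fun s : R => f (s *: u + x).
pose phi := (F - (fun s : R => s * A)) - (fun s : R => s ^+ 2 * B).
have Hd : forall c : R, is_derive c (1 : R) phi (dotv (g (c *: u + x)) u - A - 2 * c * B).
  move=> c; apply: is_deriveB; last exact: dsq.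
  apply: is_deriveB; last exact: dlin.
  exact: line_derive.
have hcont := @derivable_within_continuous R R phi `[0, 1]%R
  (fun c _ => @ex_derive _ _ _ _ _ _ _ (Hd c)).
have [c cin hc] := MVT ltr01 (fun c _ => Hd c) hcont.
have c0 : 0 < c by move: cin; rewrite in_itv /= => /andP [].
have ephi : forall s, phi s = f (s *: u + x) - s * A - s ^+ 2 * B by [].
rewrite !ephi !scale0r !scale1r add0r mul0r subr0 mul1r expr0n /= mul0r ?addr0 ?subr0 in hc.
rewrite expr1n mul1r ?subr0 ?mulr1 in hc.

have [h1 h2] := andP (@grad_dev _ _ g L x u c hL hs c0).
rewrite !(dotvDl, dotvNl) -/A in h1 h2.
have huu := dotvv_ge0 u.
case: hsg => hsg; rewrite /B hsg in hc *; nra.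
Qed.

Lemma descent_up (R : realType) (d : nat) (f : 'rV[R]_d -> R) g L x u :
  0 < L -> is_gradient f g -> L_smooth L g ->
  f (u + x) <= f x + dotv (g x) u + L / 2 * dotv u u.
Proof.
move=> hL hg hs; have := @descent_both R d f g L x u 1 hL hg hs (or_introl erefl).
rewrite !mul1r subr_ge0 //.
Qed.

Lemma descent_lo (R : realType) (d : nat) (f : 'rV[R]_d -> R) g L x u :
  0 < L -> is_gradient f g -> L_smooth L g ->
  f x + dotv (g x) u - L / 2 * dotv u u <= f (u + x).
Proof.
move=> hL hg hs; have := @descent_both R d f g L x u (-1) hL hg hs (or_intror erefl).
rewrite !mulN1r oppr_ge0 subr_le0 //.
Qed.

Lemma conv_first (R : realType) (d : nat) (f : 'rV[R]_d -> R) g L x y :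
  0 < L -> convex_fun f -> is_gradient f g -> L_smooth L g ->
  f x + dotv (g x) (y - x) <= f y.
Proof.
move=> hL hc hg hs.
set A := dotv (g x) (y - x).
set D := dotv (y - x) (y - x).
have hD : 0 <= D := dotvv_ge0 _.
have key : forall t : R, 0 < t -> t <= 1 -> A - f y + f x <= L / 2 * t * D.
  move=> t t0 t1.
  have h1 := @descent_lo R d f g L x (t *: (y - x)) hL hg hs.
  have h2 := hc y x t (ltW t0) t1.
  have e : t *: (y - x) + x = t *: y + (1 - t) *: x.
    by apply/rowP => i; rewrite !mxE; ring.
  rewrite e !(dotvZl, dotvZr) -/A -/D in h1.
  have h3 : t * (A - f y + f x) <= t * (L / 2 * t * D) by nra.
  by rewrite ler_pM2l in h3.
rewrite -subr_ge0; apply: contraTT isT; rewrite -ltNge => hK.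
set K := A - f y + f x.
have hK' : 0 < K by rewrite /K; lra.
have hLD : 0 <= L * D by rewrite mulr_ge0 // ltW.
have hKLD : 0 < K + L * D by lra.
pose t := K / (K + L * D).
have tpos : 0 < t by rewrite /t divr_gt0.
have t1 : t <= 1 by rewrite /t ler_pdivrMr // mul1r; lra.
have := key t tpos t1.
rewrite -/K /t => h.
have h' : K * (K + L * D) <= L / 2 * (K / (K + L * D)) * D * (K + L * D).
  by rewrite ler_pM2r.
have e : L / 2 * (K / (K + L * D)) * D * (K + L * D) = L / 2 * K * D.
  by field; rewrite gt_eqF.
rewrite e in h'.
have hKK : 0 < K * K by rewrite mulr_gt0.
have hKLD2 : 0 <= K * (L * D) by rewrite mulr_ge0 // ltW.
nra.
Qed.

Lemma cocoercive (R : realType) (d : nat) (f : 'rV[R]_d -> R) g L x y :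
  0 < L -> convex_fun f -> is_gradient f g -> L_smooth L g ->
  f x + dotv (g x) (y - x) + dotv (g y - g x) (g y - g x) / (2 * L) <= f y.
Proof.
move=> hL hc hg hs.
set w := g y - g x.
set u := - (L^-1 *: w).
have h1 := @conv_first R d f g L x (u + y) hL hc hg hs.
have h2 := @descent_up R d f g L y u hL hg hs.
have e2 : dotv (g y) u + L / 2 * dotv u u - dotv (g x) u = - (dotv w w / (2 * L)).
  rewrite /u /w !(dotvDl, dotvDr, dotvNl, dotvNr, dotvZl, dotvZr) ?(dotvC (g x) (g y)).
  field; rewrite gt_eqF //.
clearbody u w.
rewrite !(dotvDr, dotvNr) in h1 *.
have hL0 : L != 0 by rewrite gt_eqF.
lra.
Qed.
Definition Phi {R : realType} {d : nat} (L t fm fN : R) (a v p h : 'rV[R]_d) : R :=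
  L * (fm - fN) / (2 * t ^+ 2) + L ^+ 2 * dotv a v / 2
  + L ^+ 2 * (t ^+ 2 - t) ^+ 2 / 2 * dotv v v + L * (t - 1 / 2) * dotv v p
  - L * dotv v h / 2 + dotv p p / (4 * t ^+ 2)
  - (1 / 2 - 1 / (4 * t ^+ 2)) * dotv h h.

Lemma step_r {R : realType} {d : nat} (L r fm fm1 fN : R) (a v p q h : 'rV[R]_d) :
  L != 0 -> r != 0 -> 1 - r ^+ 2 != 0 ->
  let t := 1 / (1 - r ^+ 2) in let s := r / (1 - r ^+ 2) in
  let v' := v + (L * t * s ^+ 2)^-1 *: p in
  let w := L^-1 *: p + (2 * s ^+ 3 - s ^+ 2) *: v' in
  Phi L t fm fN a v p h =
  Phi L s fm1 fN (a + w) v' q h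
  + L / (2 * s ^+ 2) * (fm - fm1 - dotv q w - dotv (p - q) (p - q) / (2 * L))
  + L * (1 / (2 * s ^+ 2) - 1 / (2 * t ^+ 2)) *
      (fN - fm - dotv p a - dotv (h - p) (h - p) / (2 * L)).
Proof.
move=> L0 r0 r1 t s v' w.
rewrite /Phi /w /v'.
rewrite !(dotvDl, dotvDr, dotvNl, dotvNr, dotvZl, dotvZr).
rewrite ?(dotvC v a) ?(dotvC p a) ?(dotvC q a) ?(dotvC h a) ?(dotvC p v) ?(dotvC q v)
  ?(dotvC h v) ?(dotvC q p) ?(dotvC h p) ?(dotvC h q).
rewrite /t /s.
field.
by rewrite ?pnatr_eq0 ?mulf_neq0 ?expf_neq0 ?L0 ?r0 ?r1 //= ?pnatr_eq0.

Qed.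

Lemma dotv0r (R : realType) (d : nat) (z : 'rV[R]_d) : dotv z 0 = 0.
Proof. by rewrite dotvC dotv0l. Qed.

Lemma step (R : realType) (d : nat) (L t s fm fm1 fN : R) (a v p q h : 'rV[R]_d) :
  0 < L -> 0 < t -> 0 < s -> t ^+ 2 - t = s ^+ 2 ->
  Phi L t fm fN a v p h =
  Phi L s fm1 fN (a + (L^-1 *: p + (2 * s ^+ 3 - s ^+ 2) *: (v + (L * t * s ^+ 2)^-1 *: p)))
      (v + (L * t * s ^+ 2)^-1 *: p) q h
  + L / (2 * s ^+ 2) * (fm - fm1
       - dotv q (L^-1 *: p + (2 * s ^+ 3 - s ^+ 2) *: (v + (L * t * s ^+ 2)^-1 *: p))
       - dotv (p - q) (p - q) / (2 * L))
  + L * (1 / (2 * s ^+ 2) - 1 / (2 * t ^+ 2)) *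
      (fN - fm - dotv p a - dotv (h - p) (h - p) / (2 * L)).
Proof.
move=> hL ht hs hts.
pose r := s / t.
have e1 : 1 - r ^+ 2 = t^-1.
  by rewrite /r expr_div_n -hts; field; rewrite gt_eqF.
have et : t = 1 / (1 - r ^+ 2) by rewrite e1 div1r invrK.
have es : s = r / (1 - r ^+ 2) by rewrite e1 invrK /r divfK // gt_eqF.
have r0 : r != 0 by rewrite /r mulf_neq0 // ?invr_eq0 gt_eqF.
have r1 : 1 - r ^+ 2 != 0 by rewrite e1 invr_eq0 gt_eqF.
have H := @step_r R d L r fm fm1 fN a v p q h (lt0r_neq0 hL) r0 r1.
cbv zeta in H.
by rewrite -et -es in H.
Qed.

Lemma min_bound (R : realType) (d : nat) (f : 'rV[R]_d -> R) g L xs y :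
  0 < L -> is_gradient f g -> L_smooth L g -> (forall z, f xs <= f z) ->
  2 * L * f xs + dotv (g y) (g y) <= 2 * L * f y.
Proof.
move=> hL hg hs hm.
have h := @descent_up R d f g L y (- (L^-1 *: g y)) hL hg hs.
have h2 := hm (- (L^-1 *: g y) + y).
rewrite !(dotvNl, dotvNr, dotvZl, dotvZr) in h.
have e : f y - L^-1 * dotv (g y) (g y) + L / 2 * - - (L^-1 * (L^-1 * dotv (g y) (g y)))
  = f y - dotv (g y) (g y) / (2 * L) by field; rewrite gt_eqF.
rewrite e in h.
rewrite -subr_ge0.
have -> : 2 * L * f y - (2 * L * f xs + dotv (g y) (g y))
  = 2 * L * (f y - dotv (g y) (g y) / (2 * L) - f xs) by field; rewrite gt_eqF.
apply: mulr_ge0; first by rewrite mulr_ge0 // ltW.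
rewrite subr_ge0; exact: le_trans h2 h.
Qed.

Lemma theta_bound (R : realType) (N : nat) (theta : nat -> R) :
  theta N = 1 ->
  (forall k, (k < N)%N -> 0 < theta k /\ theta k ^+ 2 - theta k = theta k.+1 ^+ 2) ->
  forall j, (j <= N)%N -> (j%:R + 2) / 2 <= theta (N - j)%N.
Proof.
move=> hN hth; elim=> [_|j IH hj]; first by rewrite subn0 hN add0r divff.
have hm : (N - j.+1 < N)%N by rewrite ltn_subrL; apply/andP; split; [|apply: leq_ltn_trans hj].
have hm1 : (N - j.+1).+1 = (N - j)%N by rewrite subnSK.
have := IH (ltnW hj); rewrite -hm1.
have [hp hr] := hth _ hm.
set a := theta (N - j.+1)%N; set b := theta (N - j.+1)%N.+1 => hb.
rewrite -/a -/b in hr hp.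
have hb0 : 0 < b by apply: lt_le_trans hb; rewrite divr_gt0 // ltr_wpDl.
have : b + 1 / 2 <= a.
  have hb2 : 0 < b ^+ 2 by rewrite exprn_gt0.
  have ha1 : 1 < a by rewrite !expr2 in hr hb2; nra.
  have hab : b ^+ 2 <= (a - 1 / 2) ^+ 2.
    have -> : (a - 1 / 2) ^+ 2 = b ^+ 2 + 1 / 4 by rewrite -hr; field.
    lra.
  rewrite -lerBrDr.
  by rewrite -(ler_pXn2r (n := 2)) // nnegrE; [rewrite ltW | lra].
move=> hab; have -> : (j.+1)%:R = j%:R + 1 :> R by rewrite -addn1 natrD.
lra.
Qed.

Theorem theorem1 (R : realType) (d : nat) (f : 'rV[R]_d -> R)
  (g : 'rV[R]_d -> 'rV[R]_d) (L : R) (xstar x0 : 'rV[R]_d) (Delta0 : R)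
  (N : nat) (theta : nat -> R) (v x : nat -> 'rV[R]_d) :
  0 < L ->
  convex_fun f ->
  is_gradient f g ->
  L_smooth L g ->
  (forall y, f xstar <= f y) ->
  f x0 - f xstar <= Delta0 ->
  (1 <= N)%N ->
  theta N = 1 ->
  (forall k, (k < N)%N -> 0 < theta k /\ theta k ^+ 2 - theta k = theta k.+1 ^+ 2) ->
  v 0%N = 0 ->
  x 0%N = x0 ->
  (forall k, (k < N)%N ->
     v k.+1 = v k + (L * theta k * theta k.+1 ^+ 2)^-1 *: g (x k)) ->
  (forall k, (k < N)%N ->
     x k.+1 = x k - L^-1 *: g (x k)
              - (2 * theta k.+1 ^+ 3 - theta k.+1 ^+ 2) *: v k.+1) ->
  enorm (g (x N)) ^+ 2 <= 8 * L * Delta0 / (N%:R + 2) ^+ 2.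
Proof.
move=> hL hc hg hs hmin hD hN hthN hth hv0 hx0 hv hx.
have thpos : forall k, (k <= N)%N -> 0 < theta k.
  move=> k hk; case: (ltnP k N) => hkN; first by case: (hth k hkN).
  have -> : k = N by apply/eqP; rewrite eqn_leq hk hkN.
  by rewrite hthN ltr01.
pose P m := Phi L (theta m) (f (x m)) (f (x N)) (x N - x m) (v m) (g (x m)) (g (x N)).
have PN : P N = 0.
  by rewrite /P /Phi hthN (subrr (x N)) dotv0l; field.
have Pge : forall j, (j <= N)%N -> 0 <= P (N - j)%N.
  elim=> [_|j IH hj]; first by rewrite subn0 PN.
  have hm : (N - j.+1 < N)%N by rewrite ltn_subrL; apply/andP; split; [|apply: leq_ltn_trans hj].
  have hm1 : (N - j.+1).+1 = (N - j)%N by rewrite subnSK.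
  have IH' := IH (ltnW hj); rewrite -hm1 in IH'.
  set m := (N - j.+1)%N in hm IH' *.
  have ht := thpos m (ltnW hm).
  have hs' := thpos m.+1 hm.
  have hr := (hth m hm).2.
  have E := @step R d L (theta m) (theta m.+1) (f (x m)) (f (x m.+1)) (f (x N))
     (x N - x m) (v m) (g (x m)) (g (x m.+1)) (g (x N)) hL ht hs' hr.
  rewrite -(hv m hm) in E.
  have ew : L^-1 *: g (x m) + (2 * theta m.+1 ^+ 3 - theta m.+1 ^+ 2) *: v m.+1
            = x m - x m.+1.
    by rewrite (hx m hm); apply/rowP => i; rewrite !mxE; ring.
  rewrite ew in E.
  have ea : x N - x m + (x m - x m.+1) = x N - x m.+1.
    by apply/rowP => i; rewrite !mxE; ring.
  rewrite ea in E.
  rewrite /P E.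
  have hI := @cocoercive R d f g L (x m.+1) (x m) hL hc hg hs.
  have hJ := @cocoercive R d f g L (x m) (x N) hL hc hg hs.
  have hw1 : 0 <= L / (2 * theta m.+1 ^+ 2).
    by apply: divr_ge0; [exact: ltW | rewrite mulr_ge0 // exprn_ge0 // ltW].
  have hw2 : 0 <= L * (1 / (2 * theta m.+1 ^+ 2) - 1 / (2 * theta m ^+ 2)).
    have hs2 : theta m ^+ 2 - theta m != 0 by rewrite hr expf_neq0 // gt_eqF.
    have -> : 1 / (2 * theta m.+1 ^+ 2) - 1 / (2 * theta m ^+ 2)
              = 1 / (2 * theta m * theta m.+1 ^+ 2).
      by rewrite -hr; field; rewrite hs2 gt_eqF.
    apply: mulr_ge0; first exact: ltW.
    apply: divr_ge0 => //; apply: mulr_ge0; last by rewrite exprn_ge0 // ltW.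
    by rewrite mulr_ge0 // ltW.
  apply: addr_ge0; first apply: addr_ge0.
  - exact: IH'.
  - by apply: mulr_ge0 => //; lra.
  - by apply: mulr_ge0 => //; lra.
have P0 := Pge N (leqnn N).
rewrite subnn /P /Phi hv0 hx0 !dotv0l dotv0r in P0.
have K0 := @min_bound R d f g L xstar x0 hL hg hs hmin.
have KN := @min_bound R d f g L xstar (x N) hL hg hs hmin.
have T0 := thpos 0%N (leq0n N).
have Tb := @theta_bound R N theta hthN hth N (leqnn N).
rewrite subnn in Tb.
set T := theta 0%N in P0 T0 Tb.
set hh := dotv (g (x N)) (g (x N)) in P0 KN *.
set gg := dotv (g x0) (g x0) in P0 K0.
have e : 4 * T ^+ 2 * (L * (f x0 - f (x N)) / (2 * T ^+ 2) + L ^+ 2 * 0 / 2 +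
    L ^+ 2 * (T ^+ 2 - T) ^+ 2 / 2 * 0 + L * (T - 1 / 2) * 0 - L * 0 / 2 +
    gg / (4 * T ^+ 2) - (1 / 2 - 1 / (4 * T ^+ 2)) * hh)
  = 2 * L * (f x0 - f (x N)) + gg - (2 * T ^+ 2 - 1) * hh.
  by field; rewrite gt_eqF.
have P0' := mulr_ge0 (mulr_ge0 (ler0n _ 4) (exprn_ge0 2 (ltW T0))) P0.
rewrite e in P0'.
have key : hh * T ^+ 2 <= 2 * L * Delta0.
  have : 2 * L * (f x0 - f xstar) <= 2 * L * Delta0 by rewrite ler_pM2l ?mulr_gt0.
  nra.
rewrite sq_enorm -/hh.
have N2 : 0 < N%:R + 2 :> R by rewrite ltr_wpDl.
rewrite ler_pdivlMr ?exprn_gt0 //.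
have hh0 : 0 <= hh := dotvv_ge0 _.
have : (N%:R + 2) ^+ 2 <= 4 * T ^+ 2.
  have hu : 0 <= (N%:R + 2) / 2 :> R by rewrite divr_ge0 // ltW.
  set u := (N%:R + 2) / 2 in Tb hu.
  have -> : N%:R + 2 = 2 * u by rewrite /u; field.
  rewrite !expr2; nra.
nra.
Qed.
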